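(* Let $\mathscr{X}$ be a totally bounded normed metric space, consider a channel with transition mapping $N$ as described in the context, and let $0\le\delta<m_{\mathscr{Y}}(V_N)$. Then $$C^\delta_N=\sup\Big\{ I_{\tilde\delta/|[\![X]\!]|}(Y;X)\ :\ \tilde\delta\ge0,\ X\in\mathscr{F}_{\tilde\delta},\ \tilde\delta\le \delta/m_{\mathscr{Y}}([\![Y]\!])\Big\}\ \text{bits},$$ where $Y$ is the received UV corresponding to the transmitted UV $X$.
   Context: Uncertain variables (UVs): a UV is a map $U$ from a sample space $\Omega$ to a set; jointly considered UVs share $\Omega$. $[\![U]\!]=\{U(\omega)\}$; $[\![U|w]\!]=\{U(\omega):W(\omega)=w\}$, $[\![U|W]\!]=\{[\![U|w]\!]:w\in[\![W]\!]\}$. An uncertainty function on a set $\mathscr{U}$ is a map $m$ on subsets of $\mathscr{U}$ with $m(\emptyset)=0$, $0<m(S)<\infty$ for nonempty $S$, $\max\{m(S_1),m(S_2)\}\le m(S_1\cup S_2)$. Association: with uncertainty functions $m_{\mathscr{X}},m_{\mathscr{Y}}$ on the value sets of $X,Y$, $\mathscr{A}(X;Y)=\{m_{\mathscr{X}}([\![X|y_1]\!]\cap[\![X|y_2]\!])/m_{\mathscr{X}}([\![X]\!]):y_1\ne y_2\in[\![Y]\!]\}\setminus\{0\}$, $\mathscr{A}(Y;X)=\{m_{\mathscr{Y}}([\![Y|x_1]\!]\cap[\![Y|x_2]\!])/m_{\mathscr{Y}}([\![Y]\!]):x_1\ne x_2\in[\![X]\!]\}\setminus\{0\}$. $\mathscr{A}\succ\delta$: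 all elements $>\delta$ (false for $\emptyset$); $\mathscr{A}\preceq\delta$: all elements $\le\delta$ (true for $\emptyset$). $(X,Y)\stackrel{d}{\leftrightarrow}(\delta_1,\delta_2)$ iff $\mathscr{A}(X;Y)\succ\delta_1,\mathscr{A}(Y;X)\succ\delta_2$; $(X,Y)\stackrel{a}{\leftrightarrow}(\delta_1,\delta_2)$ iff $\mathscr{A}(X;Y)\preceq\delta_1,\mathscr{A}(Y;X)\preceq\delta_2$. $\delta$-mutual information: for UVs $U$ (values in $\mathscr{U}$ with uncertainty function $m_{\mathscr{U}}$) and $W$, points $u,u'\in[\![U]\!]$ are $\delta$-connected via $[\![U|W]\!]$ if there are $w_1,\dots,w_N\in[\![W]\!]$ with $u\in[\![U|w_1]\!]$, $u'\in[\![U|w_N]\!]$, $m_{\mathscr{U}}([\![U|w_i]\!]\cap[\![U|w_{i-1}]\!])/m_{\mathscr{U}}([\![U]\!])>\delta$ for $1<i\le N$; a set is $\delta$-connected if all pairs of its points are. A $\delta$-overlap family $[\![U|W]\!]^*_\delta$ is a family of distinct subsets covering $[\![U]\!]$, of largest cardinality among covering families such that (i) each member is $\delta$-connected and contains some $[\![U|w]\!]$; (ii) distinct members $S_1,S_2$ satisfy $m_{\mathscr{U}}(S_1\cap S_2)\le\delta\, m_{\mathscr{U}}([\![U]\!])$; (iii) each $[\![U|w]\!]$ lies in some member. $I_\delta(U;W)=\log_2|[\![U|W]\!]^*_\delta|$ if such a family exists, else $0$. Channel: $\mathscr{Y}$ is the output set, $N$ maps each $x\in\mathscr{X}$ to a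 set $N(x)\subseteq\mathscr{Y}$ (the possible received points, $S_N(x)=N(x)$); $m_{\mathscr{X}},m_{\mathscr{Y}}$ are uncertainty functions on $\mathscr{X},\mathscr{Y}$ with $m_{\mathscr{Y}}(\mathscr{Y})=1$. $V_N=N(x^* )$ where $x^*$ minimizes $m_{\mathscr{Y}}(N(x))$ over $\mathscr{X}$. A codebook is a discrete set $\mathcal{C}\subseteq\mathscr{X}$; $e_N(x_1,x_2)=m_{\mathscr{Y}}(N(x_1)\cap N(x_2))/m_{\mathscr{Y}}(\mathscr{Y})$; $\mathcal{C}$ is $(N,\delta)$-distinguishable if $e_N(x_1,x_2)\le\delta/|\mathcal{C}|$ for all distinct $x_1,x_2\in\mathcal{C}$; $C^\delta_N=\sup\log_2|\mathcal{C}|$ over $(N,\delta)$-distinguishable codebooks. For a codebook $\mathcal{C}$, the transmitted UV $X$ and received UV $Y$ satisfy $[\![X]\!]=\mathcal{C}$, $[\![Y]\!]=\bigcup_{x\in\mathcal{C}}N(x)$, $[\![Y|x]\!]=\{y\in[\![Y]\!]:y\in N(x)\}$, $[\![X|y]\!]=\{x\in[\![X]\!]:y\in N(x)\}$. Feasible set: $\mathscr{F}_\delta$ is the set of transmitted UVs $X$ with $[\![X]\!]\subseteq\mathscr{X}$ a codebook such that either $(X,Y)\stackrel{d}{\leftrightarrow}(0,\delta/|[\![X]\!]|)$ or $(X,Y)\stackrel{a}{\leftrightarrow}(1,\delta/|[\![X]\!]|)$. *)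

(* Defs.v *)
From HB Require Import structures.
From mathcomp Require Import all_boot all_order all_algebra.
From mathcomp Require Import finmap.
From mathcomp Require Import all_classical all_reals all_analysis.
Set Implicit Arguments. Unset Strict Implicit. Unset Printing Implicit Defensive.
Import Order.TTheory GRing.Theory Num.Theory.
Import numFieldNormedType.Exports.
Local Open Scope classical_set_scope.
Local Open Scope ring_scope.


Section Defs.
Variable R : realType.

Definition log2 (x : R) : R := ln x / ln 2.

Definition totally_bounded_set {T : pseudoMetricType R} (A : set T) : Prop :=
  forall e : R, 0 < e ->
    exists F : {fset T}, A `<=` \bigcup_(f in [set` F]) ball f e.

Definition uncertainty_fun {U : Type} (D : set U) (m : set U -> R) : Prop :=
  [/\ m set0 = 0,
      (forall S, S `<=` D -> S !=set0 -> 0 < m S) &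
      (forall S1 S2, S1 `<=` D -> S2 `<=` D ->
          Num.max (m S1) (m S2) <= m (S1 `|` S2))].

(* ---- delta-mutual information I_delta(U;W) ----
   rngU = [[U]], rngW = [[W]], cond w = [[U|w]], mU uncertainty function. *)
Section DeltaMI.
Variables (U W : Type) (rngU : set U) (rngW : set W) (cond : W -> set U)
  (mU : set U -> R) (delta : R).

Definition dconn (u u' : U) : Prop :=
  exists (n : nat) (w : nat -> W),
    (forall i, (i <= n)%N -> rngW (w i)) /\
    cond (w 0%N) u /\ cond (w n) u' /\
    (forall i, (0 < i <= n)%N ->
       mU (cond (w i) `&` cond (w i.-1)) / mU rngU > delta).

Definition dconnected (S : set U) : Prop :=
  forall u u', S u -> S u' -> dconn u u'.

Definition overlap_family (n : nat) (F : 'I_n -> set U) : Prop :=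
  [/\ injective F,
      (forall i, F i `<=` rngU) /\
      rngU `<=` \bigcup_(i in [set: 'I_n]) F i,
      (forall i, dconnected (F i) /\ exists w, rngW w /\ cond w `<=` F i),
      (forall i j, i <> j -> mU (F i `&` F j) <= delta * mU rngU) &
      (forall w, rngW w -> exists i, cond w `<=` F i)].

Definition overlap_card (n : nat) : Prop :=
  (exists F : 'I_n -> set U, overlap_family F) /\
  (forall (n' : nat) (G : 'I_n' -> set U), overlap_family G -> (n' <= n)%N).

Definition Idelta : R :=
  match pselect (exists n, overlap_card n) with
  | left _ => log2 (xget 0%N overlap_card)%:R
  | right _ => 0
  end.
End DeltaMI.

Section Channel.
Variables (V : normedModType R) (Y : Type) (N : V -> set Y).

(* For a codebook C: [[Y]], [[Y|x]] = N x, [[X|y]] *)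
Definition rngY (C : {fset V}) : set Y := \bigcup_(x in [set` C]) N x.
Definition condX (C : {fset V}) (y : Y) : set V := [set x | x \in C /\ N x y].

Definition codebook (Xs : set V) (C : {fset V}) : Prop :=
  C != fset0 /\ [set` C] `<=` Xs.

Definition cardR (C : {fset V}) : R := (#|` C|)%fset%:R.

Definition eN (mY : set Y -> R) (x1 x2 : V) : R := mY (N x1 `&` N x2) / mY setT.

Definition distinguishable (mY : set Y -> R) (delta : R) (C : {fset V}) :=
  forall x1 x2, x1 \in C -> x2 \in C -> x1 <> x2 -> eN mY x1 x2 <= delta / cardR C.

Definition capacity (Xs : set V) (mY : set Y -> R) (delta : R) : \bar R :=
  ereal_sup [set (log2 (cardR C))%:E | C in
              [set C | codebook Xs C /\ distinguishable mY delta C]].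

Definition assocXY (mX : set V -> R) (C : {fset V}) : set R :=
  [set r | exists y1 y2, rngY C y1 /\ rngY C y2 /\ y1 <> y2 /\
      r = mX (condX C y1 `&` condX C y2) / mX [set` C]] `\ 0.
Definition assocYX (mY : set Y -> R) (C : {fset V}) : set R :=
  [set r | exists x1 x2, x1 \in C /\ x2 \in C /\ x1 <> x2 /\
      r = mY (N x1 `&` N x2) / mY (rngY C)] `\ 0.

Definition succ_set (A : set R) (d : R) : Prop := A !=set0 /\ forall r, A r -> d < r.
Definition preceq_set (A : set R) (d : R) : Prop := forall r, A r -> r <= d.

(* X (with [[X]] = C) belongs to the feasible set F_dt *)
Definition feasible (Xs : set V) (mX : set V -> R) (mY : set Y -> R) (dt : R)
    (C : {fset V}) : Prop :=
  codebook Xs C /\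
  ((succ_set (assocXY mX C) 0 /\ succ_set (assocYX mY C) (dt / cardR C)) \/
   (preceq_set (assocXY mX C) 1 /\ preceq_set (assocYX mY C) (dt / cardR C))).

(* I_delta(Y;X) for the transmitted UV with [[X]] = C *)
Definition IYX (mY : set Y -> R) (delta : R) (C : {fset V}) : R :=
  Idelta (rngY C) [set` C] N mY delta.

End Channel.
End Defs.

(* Main.v *)
Require Import Defs.
From HB Require Import structures.
From mathcomp Require Import all_boot all_order all_algebra.
From mathcomp Require Import finmap.
From mathcomp Require Import all_classical all_reals all_analysis.
Import Order.TTheory GRing.Theory Num.Theory.
Local Open Scope classical_set_scope.
Local Open Scope ring_scope.
Set Implicit Arguments. Unset Strict Implicit.

Lemma um_mono (R : realType) (U : Type) (D : set U) (m : set U -> R) (A B : set U) :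
  uncertainty_fun D m -> A `<=` B -> B `<=` D -> m A <= m B.
Proof.
case=> _ _ h AB BD.
have := h A B (subset_trans AB BD) BD.
rewrite setUidr //; apply: le_trans; by rewrite le_max lexx.
Qed.

Lemma overlap_card_uniq (R : realType) (U W : Type) (rngU : set U) (rngW : set W)
  (cond : W -> set U) (mU : set U -> R) (d : R) a b :
  overlap_card rngU rngW cond mU d a -> overlap_card rngU rngW cond mU d b -> a = b.
Proof.
move=> [[Fa fa] ha] [[Fb fb] hb].
by apply/eqP; rewrite eqn_leq (hb _ _ fa) (ha _ _ fb).
Qed.

Lemma fam_w (R : realType) (V : normedModType R) (Y : Type) (N : V -> set Y)
  (mY : set Y -> R) (C : {fset V}) (d : R) (xstar : V) n (G : 'I_n -> set Y) :
  uncertainty_fun setT mY ->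
  (forall x, x \in C -> mY (N xstar) <= mY (N x)) ->
  d * mY (rngY N C) < mY (N xstar) ->
  overlap_family (rngY N C) [set` C] N mY d G ->
  exists w : 'I_n -> V, [/\ injective w, (forall i, w i \in C),
     (forall i, N (w i) `<=` G i) & (n <= #|` C|)%N].
Proof.
move=> um hmin hd [_ _ Hi Hov _].
have [w Hw] := boolp.choice (fun i => (Hi i).2).
have winj : injective w.
  move=> i j eqw; apply: boolp.contrapT => ne.
  have := Hov i j ne.
  have sub : N (w i) `<=` G i `&` G j.
    by move=> y Ny; split; [exact: (Hw i).2 | rewrite eqw in Ny; exact: (Hw j).2].
  have := um_mono um sub (@subsetT _ _).
  have := hmin _ (Hw i).1.
  move=> h1 h2 h3.
  have := lt_le_trans hd (le_trans h1 (le_trans h2 h3)).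
  by rewrite ltxx.
exists w; split => //.
- by move=> i; exact: (Hw i).1.
- by move=> i; exact: (Hw i).2.
have sub : ([fset w i | i : 'I_n] `<=` C)%fset.
  apply/fsubsetP => x /imfsetP [i _ ->]; exact: (Hw i).1.
have := fsubset_leq_card sub.
by rewrite card_imfset //= size_enum_ord.
Qed.

Lemma div_card_le (R : realType) (d : R) (k : nat) : 0 <= d -> (0 < k)%N -> d / k%:R <= d.
Proof.
move=> d0 k0; rewrite ler_pdivrMr ?ltr0n //; apply: ler_peMr => //.
by rewrite ler1n.
Qed.

Unset Implicit Arguments. Set Strict Implicit.

Theorem theorem7 (R : realType) (V : normedModType R) (Xs : set V)
  (Y : Type) (N : V -> set Y) (mX : set V -> R) (mY : set Y -> R)
  (xstar : V) (delta : R) :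
  totally_bounded_set Xs ->
  uncertainty_fun Xs mX ->
  uncertainty_fun setT mY ->
  mY setT = 1 ->
  Xs xstar -> (forall x, Xs x -> mY (N xstar) <= mY (N x)) ->
  0 <= delta -> delta < mY (N xstar) ->
  capacity N Xs mY delta =
  ereal_sup [set r : \bar R | exists (dt : R) (C : {fset V}),
     [/\ 0 <= dt, feasible N Xs mX mY dt C, dt <= delta / mY (rngY N C) &
          r = (IYX N mY (dt / cardR C) C)%:E]].
Proof.
move=> _ umX umY mY1 Xx hmin d0 dlt.
have mrng : forall C : {fset V}, codebook Xs C -> 0 < mY (rngY N C).
  move=> C [/fset0Pn [x xC] CX].
  have sub : N x `<=` rngY N C by move=> y Ny; exists x.
  apply: lt_le_trans (um_mono umY sub (@subsetT _ _)).
  exact: le_lt_trans d0 (lt_le_trans dlt (hmin _ (CX _ xC))).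
have cardC0 : forall C : {fset V}, codebook Xs C -> (0 < #|` C|)%N.
  by move=> C [nz _]; rewrite cardfs_gt0.
have zero_le : (0%:E <= capacity N Xs mY delta)%E.
  apply: ereal_sup_ubound; exists [fset xstar]%fset.
    split; first split.
    - by apply/fset0Pn; exists xstar; rewrite inE.
    - by move=> x /=; rewrite inE => /eqP ->.
    - by move=> x1 x2; rewrite !inE => /eqP -> /eqP ->.
  by rewrite /cardR cardfs1 /log2 ln1 mul0r.
apply/eqP; rewrite eq_le; apply/andP; split.
- apply: le_ereal_sup => r [C [cbC distC] <-].
  have m0 := mrng C cbC.
  have k0 := cardC0 C cbC.
  have cR0 : 0 < cardR C by rewrite /cardR ltr0n.
  exists (delta / mY (rngY N C)), C; split.
  + by rewrite divr_ge0 // ltW.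
  + split => //; right; split.
    * move=> r0 [[y1 [y2 [_ [_ [_ ->]]]]] _].
      have [/fset0Pn [x xC] CX] := cbC.
      have mC0 : 0 < mX [set` C].
        case: umX => _ hpos _; apply: hpos => //; exists x; exact: xC.
      rewrite ler_pdivrMr // mul1r; apply: um_mono umX _ CX.
      by move=> z [[+ _] _].
    * move=> r0 [[x1 [x2 [x1C [x2C [ne ->]]]]] _].
      have := distC x1 x2 x1C x2C ne; rewrite /eN mY1 divr1 => h.
      rewrite mulrAC; apply: ler_wpM2r => //.
      by rewrite invr_ge0 ltW.
  + by [].
  +
    set d := delta / mY (rngY N C) / cardR C.
    have dm : d * mY (rngY N C) = delta / cardR C.
      by rewrite /d mulrAC divfK // gt_eqF.
    have dlt' : d * mY (rngY N C) < mY (N xstar).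
      by rewrite dm; apply: le_lt_trans (div_card_le d0 k0) dlt.
    have hminC : forall x, x \in C -> mY (N xstar) <= mY (N x).
      by move=> x xC; apply: hmin; exact: cbC.2.
    have uniqC : uniq C := fset_uniq C.
    have nthC : forall i : 'I_#|` C|, nth xstar C i \in C.
      by move=> i; apply: mem_nth; exact: ltn_ord i.
    have ov : overlap_card (rngY N C) [set` C] N mY d #|` C|.
      split; last first.
        move=> n' G fam.
        by have [w [_ _ _ ->]] := fam_w umY hminC dlt' fam.
      exists (fun i : 'I_#|` C| => N (nth xstar C i)); split.
      * move=> i j /= eqN.
        have eqn : nth xstar C i = nth xstar C j.
          apply: boolp.contrapT => ne.
          have := distC _ _ (nthC i) (nthC j) ne.
          rewrite /eN mY1 divr1 eqN setIid => h.
          have := le_trans (hminC _ (nthC j)) (le_trans h (div_card_le d0 k0)).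
          by rewrite leNgt dlt.
        apply/val_inj/eqP.
        by rewrite -(nth_uniq xstar (ltn_ord i) (ltn_ord j) uniqC) eqn.
      * split.
          by move=> i y Ny; exists (nth xstar C i) => //; exact: nthC.
        move=> y [x xC Nxy].
        have hi : (index x C < #|` C|)%N by rewrite index_mem.
        by exists (Ordinal hi) => //=; rewrite nth_index.
      * move=> i; split.
          move=> u u' hu hu'; exists 0%N, (fun _ => nth xstar C i).
          split; first by move=> _ _; exact: nthC.
          by split => //; split => //; move=> [|k].
        by exists (nth xstar C i); split => //; exact: nthC.
      * move=> i j ne /=.
        have ne' : nth xstar C i <> nth xstar C j.
          move=> eqn; apply: ne; apply/val_inj/eqP.
          by rewrite -(nth_uniq xstar (ltn_ord i) (ltn_ord j) uniqC) eqn.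
        have := distC _ _ (nthC i) (nthC j) ne'.
        by rewrite /eN mY1 divr1 dm.
      * move=> w wC.
        have hi : (index w C < #|` C|)%N by rewrite index_mem.
        by exists (Ordinal hi) => /=; rewrite nth_index.
    rewrite /IYX /Idelta; case: boolp.pselect => [ex|nex]; last first.
      by exfalso; apply: nex; exists #|` C|.
    by rewrite (overlap_card_uniq (xgetPex 0%N ex) ov).
- apply: ge_ereal_sup => r [dt [C [dt0 [cbC _] dtle ->]]].
  have m0 := mrng C cbC.
  have k0 := cardC0 C cbC.
  have cR0 : 0 < cardR C by rewrite /cardR ltr0n.
  rewrite /IYX /Idelta; case: boolp.pselect => [ex|_]; last exact: zero_le.
  set n := xget 0%N _.
  have [[F fam] _] := xgetPex 0%N ex; rewrite -/n in F fam *.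
  set d := dt / cardR C.
  have dm : d * mY (rngY N C) <= delta / cardR C.
    rewrite /d mulrAC; apply: ler_wpM2r; first by rewrite invr_ge0 ltW.
    by rewrite -ler_pdivlMr.
  have dlt' : d * mY (rngY N C) < mY (N xstar).
    by apply: le_lt_trans dm (le_lt_trans (div_card_le d0 k0) dlt).
  have hminC : forall x, x \in C -> mY (N xstar) <= mY (N x).
    by move=> x xC; apply: hmin; exact: cbC.2.
  have [w [winj wC wG nle]] := fam_w umY hminC dlt' fam.
  case: (posnP n) => [n0|npos].
    by rewrite n0 /log2 ln0 // mul0r; exact: zero_le.
  apply: ereal_sup_ubound.
  have cardC' : #|` [fset w i | i : 'I_n]%fset| = n.
    by rewrite card_imfset //= size_enum_ord.
  exists [fset w i | i : 'I_n]%fset; last by rewrite /cardR cardC'.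
  split; first split.
  + by rewrite -cardfs_gt0 cardC'.
  + by move=> x /= /imfsetP [i _ ->]; apply: cbC.2; exact: wC.
  + move=> x1 x2 /imfsetP [i _ ->] /imfsetP [j _ ->] ne.
    have ij : i <> j by move=> eij; apply: ne; rewrite eij.
    have [_ _ _ Hov _] := fam.
    have sub : N (w i) `&` N (w j) `<=` F i `&` F j.
      by move=> y [h1 h2]; split; [exact: wG | exact: wG].
    rewrite /eN mY1 divr1 /cardR cardC'.
    apply: le_trans (um_mono umY sub (@subsetT _ _)) _.
    apply: le_trans (Hov _ _ ij) _.
    apply: le_trans dm _.
    rewrite ler_wpM2l // lef_pV2 ?posrE ?ltr0n //.
    by rewrite ler_nat.
Qed.
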